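(* For any Hermitian matrices $P$ and $Q$ of the same size, $$|\mathrm{Tr}(\zeta(P+Q)-\zeta(P))|\le2\big(\|P\|_2\|Q\|_2+\|Q\|_2^2\big).$$
   Context: $\zeta:\mathbb{R}\to\mathbb{R}$ is $\zeta(x)=x^2$ for $x\le0$ and $\zeta(x)=0$ otherwise, applied to Hermitian matrices via the spectral decomposition. $\|\cdot\|_2$ is the (unnormalized) Schatten 2-norm (Frobenius norm). *)

(* Defs.v *)
From HB Require Import structures.
From mathcomp Require Import all_boot all_order all_algebra.
From mathcomp Require Import sesquilinear spectral.
Set Implicit Arguments. Unset Strict Implicit. Unset Printing Implicit Defensive.
Import Order.TTheory GRing.Theory Num.Theory.
Local Open Scope ring_scope.

(* On a numClosedFieldType the
   order is partial; on real arguments (the only ones used: eigenvalues of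
   Hermitian matrices) this is exactly the paper's zeta. *)
Definition zeta {C : numClosedFieldType} (x : C) : C :=
  if x <= 0 then x ^+ 2 else 0.

Definition mxfun {C : numClosedFieldType} (f : C -> C) n (A : 'M[C]_n) : 'M[C]_n :=
  invmx (spectralmx A) *m diag_mx (map_mx f (spectral_diag A)) *m spectralmx A.

(* unnormalized Schatten 2-norm (Frobenius norm) *)
Definition frob {C : numClosedFieldType} m n (A : 'M[C]_(m, n)) : C :=
  sqrtC (\sum_(i < m) \sum_(j < n) `|A i j| ^+ 2).

(* Main.v *)
Require Import Defs.
From HB Require Import structures.
From mathcomp Require Import all_boot all_order all_algebra.
From mathcomp Require Import sesquilinear spectral.
From mathcomp Require Import ring.
Import Order.TTheory GRing.Theory Num.Theory.
Local Open Scope ring_scope.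

Lemma cs_sq {C : numClosedFieldType} (I : finType) (x y : I -> C) :
  (forall k, x k \is Num.real) -> (forall k, y k \is Num.real) ->
  (\sum_k x k * y k) ^+ 2 <= (\sum_k x k ^+ 2) * (\sum_k y k ^+ 2).
Proof.
move=> xr yr.
have E : \sum_k \sum_l (x k * y l - x l * y k) ^+ 2 =
  2 * ((\sum_k x k ^+ 2) * (\sum_k y k ^+ 2) - (\sum_k x k * y k) ^+ 2).
  transitivity (\sum_k \sum_l (x k ^+ 2 * y l ^+ 2 + x l ^+ 2 * y k ^+ 2
                  - 2 * ((x k * y k) * (x l * y l)))).
    by apply: eq_bigr => k _; apply: eq_bigr => l _; ring.
  have e1 : (\sum_k x k ^+ 2) * (\sum_k y k ^+ 2) = \sum_k \sum_l x k ^+ 2 * y l ^+ 2.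
    by rewrite big_distrlr.
  have e2 : (\sum_k x k ^+ 2) * (\sum_k y k ^+ 2) = \sum_k \sum_l x l ^+ 2 * y k ^+ 2.
    by rewrite mulrC big_distrlr /=; apply: eq_bigr => k _; apply: eq_bigr => l _; rewrite mulrC.
  have e3 : (\sum_k x k * y k) ^+ 2 = \sum_k \sum_l (x k * y k) * (x l * y l).
    by rewrite expr2 big_distrlr.
  have -> : \sum_k \sum_l (x k ^+ 2 * y l ^+ 2 + x l ^+ 2 * y k ^+ 2
                  - 2 * ((x k * y k) * (x l * y l))) =
     (\sum_k \sum_l x k ^+ 2 * y l ^+ 2) + (\sum_k \sum_l x l ^+ 2 * y k ^+ 2)
      - 2 * \sum_k \sum_l (x k * y k) * (x l * y l).
    rewrite mulr_sumr -big_split -sumrB; apply: eq_bigr => k _.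
    by rewrite mulr_sumr -big_split -sumrB.
  rewrite -e1 -e2 -e3; ring.
have H : 0 <= 2 * ((\sum_k x k ^+ 2) * (\sum_k y k ^+ 2) - (\sum_k x k * y k) ^+ 2).
  rewrite -E; apply: sumr_ge0 => k _; apply: sumr_ge0 => l _.
  rewrite -real_normK ?exprn_ge0 //.
  by apply: rpredB; apply: rpredM.
by move: H; rewrite pmulr_rge0 // subr_ge0.
Qed.

Lemma tri_sum {C : numClosedFieldType} (I : finType) (a b : I -> C) :
  \sum_k `|a k - b k| ^+ 2 <=
  (sqrtC (\sum_k `|a k| ^+ 2) + sqrtC (\sum_k `|b k| ^+ 2)) ^+ 2.
Proof.
set S := \sum_k `|a k| ^+ 2; set T := \sum_k `|b k| ^+ 2.
have S0 : 0 <= S by apply: sumr_ge0 => k _; rewrite exprn_ge0.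
have T0 : 0 <= T by apply: sumr_ge0 => k _; rewrite exprn_ge0.
apply: (@le_trans _ _ (\sum_k (`|a k| + `|b k|) ^+ 2)).
  apply: ler_sum => k _; apply: lerXn2r; rewrite ?nnegrE ?addr_ge0 //.
  exact: ler_normB.
have cs : \sum_k `|a k| * `|b k| <= sqrtC S * sqrtC T.
  rewrite -ler_sqr ?nnegrE ?mulr_ge0 ?sqrtC_ge0 //; last first.
    by apply: sumr_ge0 => k _; rewrite mulr_ge0.
  rewrite exprMn !sqrtCK; apply: cs_sq => k; exact: normr_real.
have -> : \sum_k (`|a k| + `|b k|) ^+ 2 = S + T + 2 * \sum_k `|a k| * `|b k|.
  rewrite mulr_sumr -!big_split /=; apply: eq_bigr => k _.
  by move: (`|a k|) (`|b k|) => u v; ring.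
have -> : (sqrtC S + sqrtC T) ^+ 2 = S + T + 2 * (sqrtC S * sqrtC T).
  rewrite -{2}(sqrtCK S) -{2}(sqrtCK T); move: (sqrtC S) (sqrtC T) => u v; ring.
by rewrite lerD2l ler_pM2l.
Qed.

Local Open Scope sesquilinear_scope.

Definition f2 {C : numClosedFieldType} {n} (A : 'M[C]_n) : C :=
  \sum_i \sum_j `|A i j| ^+ 2.

Lemma f2_tr {C : numClosedFieldType} n (A : 'M[C]_n) : f2 A = \tr (A *m (A ^t* )).
Proof.
rewrite /f2 /mxtrace; apply: eq_bigr => i _; rewrite mxE.
by apply: eq_bigr => j _; rewrite !mxE normCK.
Qed.

Lemma f2_ge0 {C : numClosedFieldType} n (A : 'M[C]_n) : 0 <= f2 A.
Proof. by apply: sumr_ge0 => i _; apply: sumr_ge0 => j _; rewrite exprn_ge0. Qed.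

Lemma ctmul {C : numClosedFieldType} m n p (A : 'M[C]_(m, n)) (B : 'M[C]_(n, p)) :
  (A *m B) ^t* = (B ^t* ) *m (A ^t* ).
Proof. by rewrite trmx_mul map_mxM. Qed.

Lemma f2_unitary {C : numClosedFieldType} n (U M : 'M[C]_n) :
  U \is unitarymx -> f2 ((U ^t* ) *m M *m U) = f2 M.
Proof.
move=> uU.
rewrite !f2_tr !ctmul trmxCK !mulmxA mulmxtVK //.
rewrite -!mulmxA mxtrace_mulC !mulmxA mulmxtVK //.
Qed.

Lemma f2_diag {C : numClosedFieldType} n (d : 'rV[C]_n) :
  f2 (diag_mx d) = \sum_i `|d 0 i| ^+ 2.
Proof.
rewrite /f2; apply: eq_bigr => i _.
rewrite (bigD1 i) //= big1 ?addr0; first by rewrite mxE eqxx mulr1n.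
by move=> j /negPf ji; rewrite mxE eq_sym ji mulr0n normr0 expr0n.
Qed.

Lemma f2_opp {C : numClosedFieldType} n (A : 'M[C]_n) : f2 (- A) = f2 A.
Proof. by rewrite /f2; apply: eq_bigr => i _; apply: eq_bigr => j _; rewrite mxE normrN. Qed.

Lemma f2_tri {C : numClosedFieldType} n (A B : 'M[C]_n) :
  f2 (A - B) <= (sqrtC (f2 A) + sqrtC (f2 B)) ^+ 2.
Proof.
rewrite /f2 !pair_big /=.
have -> : \sum_p `|(A - B) p.1 p.2| ^+ 2 = \sum_p `|A p.1 p.2 - B p.1 p.2| ^+ 2.
  by apply: eq_bigr => p _; rewrite !mxE.
exact (@tri_sum _ ('I_n * 'I_n)%type (fun p => A p.1 p.2) (fun p => B p.1 p.2)).
Qed.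

Lemma zeta_le {C : numClosedFieldType} (d w : C) : d \is Num.real -> 0 <= w ->
  zeta d <= `|d - w| ^+ 2.
Proof.
move=> dr w0; rewrite /zeta; case: ifP => d0; last by rewrite exprn_ge0.
have dw0 : d - w <= 0 by rewrite subr_le0 (le_trans d0).
rewrite -real_normK //; apply: lerXn2r; rewrite ?nnegrE //.
by rewrite ler0_norm // ler0_norm // opprB -subr_ge0 opprK subrK.
Qed.

Lemma key {C : numClosedFieldType} n (U V : 'M[C]_n) (d c : 'rV[C]_n) :
  U \is unitarymx -> V \is unitarymx -> (forall i, d 0 i \is Num.real) ->
  (forall i, 0 <= c 0 i) ->
  \sum_i zeta (d 0 i) <=
    f2 ((U ^t* ) *m diag_mx d *m U - (V ^t* ) *m diag_mx c *m V).
Proof.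
move=> uU uV dr c0.
have uU' : (U ^t* ) \is unitarymx by rewrite trmxC_unitary.
rewrite -(@f2_unitary _ _ _ _ uU') trmxCK.
set M := V *m (U ^t* ).
have -> : U *m ((U ^t* ) *m diag_mx d *m U - (V ^t* ) *m diag_mx c *m V) *m (U ^t* )
    = diag_mx d - (M ^t* ) *m diag_mx c *m M.
  rewrite mulmxBr mulmxBl !mulmxA (unitarymxP uU) mul1mx mulmxtVK //.
  by rewrite /M ctmul trmxCK.
rewrite /f2; apply: ler_sum => i _.
rewrite (bigD1 i) //=.
apply: (le_trans _ (_ : `|(diag_mx d - (M ^t* ) *m diag_mx c *m M) i i| ^+ 2 <= _)); last first.
  by rewrite lerDl; apply: sumr_ge0 => j _; rewrite exprn_ge0.
have Wii : ((M ^t* ) *m diag_mx c *m M) i i = \sum_k c 0 k * `|M k i| ^+ 2.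
  rewrite mul_mx_diag mxE; apply: eq_bigr => k _; rewrite !mxE normCK.
  ring.
have -> : (diag_mx d - (M ^t* ) *m diag_mx c *m M) i i = d 0 i - ((M ^t* ) *m diag_mx c *m M) i i.
  by rewrite mxE [diag_mx d i i]mxE eqxx mulr1n [X in _ + X = _]mxE.
rewrite Wii.
apply: zeta_le => //; apply: sumr_ge0 => k _; rewrite mulr_ge0 ?exprn_ge0 //.
Qed.
Lemma arith {R : numDomainType} (u v p q : R) : 0 <= u -> 0 <= v -> 0 <= q ->
  u <= p -> u <= v + q -> v <= u + q ->
  `|v ^+ 2 - u ^+ 2| <= 2 * (p * q + q ^+ 2).
Proof.
move=> u0 v0 q0 up uvq vuq.
have p0 : 0 <= p := le_trans u0 up.
case/orP: (real_leVge (ger0_real u0) (ger0_real v0)) => h.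
  have h2 : u ^+ 2 <= v ^+ 2 by apply: lerXn2r; rewrite ?nnegrE.
  rewrite ger0_norm ?subr_ge0 // subr_sqr.
  have -> : 2 * (p * q + q ^+ 2) = q * (p + q + p) + q ^+ 2 by ring.
  apply: ler_wpDr; first by rewrite exprn_ge0.
  apply: ler_pM; rewrite ?subr_ge0 ?addr_ge0 ?lerBlDl //.
  apply: lerD => //; apply: le_trans vuq _; exact: lerD.
have h2 : v ^+ 2 <= u ^+ 2 by apply: lerXn2r; rewrite ?nnegrE.
rewrite ler0_norm ?subr_le0 // opprB subr_sqr.
have -> : 2 * (p * q + q ^+ 2) = q * (p + p) + 2 * q ^+ 2 by ring.
apply: ler_wpDr; first by rewrite mulr_ge0 ?exprn_ge0.
apply: ler_pM; rewrite ?subr_ge0 ?addr_ge0 ?lerBlDl //.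
apply: lerD => //; exact: le_trans h up.
Qed.

Lemma herm_dec {C : numClosedFieldType} {n} {X : 'M[C]_n} : X \is hermsymmx ->
  X = ((spectralmx X) ^t* ) *m diag_mx (spectral_diag X) *m spectralmx X.
Proof.
move=> hX; have /hermitian_normalmx /orthomx_spectralP {1}-> := hX.
by rewrite invmx_unitary // spectral_unitarymx.
Qed.

Lemma herm_real {C : numClosedFieldType} {n} {X : 'M[C]_n} : X \is hermsymmx ->
  forall i, spectral_diag X 0 i \is Num.real.
Proof. by move=> /hermitian_spectral_diag_real /mxOverP H i; apply: H. Qed.

Lemma tr_mxfun {C : numClosedFieldType} {n} (f : C -> C) (X : 'M[C]_n) :
  \tr (mxfun f X) = \sum_i f (spectral_diag X 0 i).
Proof.
rewrite /mxfun mxtrace_mulC mulmxA mulmxV ?spectral_unit // mul1mx mxtrace_diag.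
by apply: eq_bigr => i _; rewrite mxE.
Qed.

Definition g {C : numClosedFieldType} {n} (X : 'M[C]_n) := \sum_i zeta (spectral_diag X 0 i).

Lemma g_le {C : numClosedFieldType} {n} {X V : 'M[C]_n} {c : 'rV[C]_n} :
  X \is hermsymmx -> V \is unitarymx -> (forall i, 0 <= c 0 i) ->
  g X <= f2 (X - (V ^t* ) *m diag_mx c *m V).
Proof.
move=> hX uV c0; rewrite {2}(herm_dec hX).
apply: key => //; [exact: spectral_unitarymx | exact: herm_real].
Qed.

Lemma g_le0 {C : numClosedFieldType} {n} {X : 'M[C]_n} :
  X \is hermsymmx -> g X <= f2 X.
Proof.
move=> hX; have := g_le (c := 0) hX (spectral_unitarymx X).
have -> : diag_mx (0 : 'rV[C]_n) = 0.
  by apply/matrixP => i j; rewrite !mxE mul0rn.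
by rewrite mulmx0 mul0mx subr0; apply => i; rewrite mxE.
Qed.

Lemma g_attain {C : numClosedFieldType} {n} {X : 'M[C]_n} : X \is hermsymmx ->
  exists Y : 'M[C]_n, g X = f2 (X - Y) /\
    forall Z : 'M[C]_n, Z \is hermsymmx -> g Z <= f2 (Z - Y).
Proof.
move=> hX.
set U := spectralmx X; set d := spectral_diag X.
set c : 'rV[C]_n := \row_i (if d 0 i <= 0 then 0 else d 0 i).
have c0 : forall i, 0 <= c 0 i.
  move=> i; rewrite mxE; case: ifP => // /negbT h.
  have := real_leVge (herm_real hX i) (real0 C); rewrite (negbTE h) /=; done.
exists ((U ^t* ) *m diag_mx c *m U); split; last first.
  by move=> Z hZ; apply: g_le => //; exact: spectral_unitarymx.
rewrite {2}(herm_dec hX) -/U -/d -mulmxBl -mulmxBr.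
have -> : diag_mx d - diag_mx c = diag_mx (d - c).
  by apply/matrixP => i j; rewrite !mxE mulrnBl.
rewrite f2_unitary ?spectral_unitarymx // f2_diag /g.
apply: eq_bigr => i _; rewrite /zeta !mxE; case: ifP => h.
  by rewrite subr0 real_normK // herm_real.
by rewrite subrr normr0 expr0n.
Qed.

Lemma hermD {C : numClosedFieldType} {n} {P Q : 'M[C]_n} : P \is hermsymmx -> Q \is hermsymmx -> P + Q \is hermsymmx.
Proof.
rewrite !is_hermitianmxE !expr0 !scale1r => /eqP hP /eqP hQ.
by rewrite linearD /= map_mxD -hP -hQ.
Qed.

Theorem lemma10p4 (C : numClosedFieldType) (n : nat) (P Q : 'M[C]_n)
  (hP : P \is hermsymmx) (hQ : Q \is hermsymmx) :
  `| \tr (mxfun zeta (P + Q) - mxfun zeta P) |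
    <= 2 * (frob P * frob Q + frob Q ^+ 2).
Proof.
have hPQ := hermD hP hQ.
rewrite raddfB /= !tr_mxfun.
change (`|g (P + Q) - g P| <= 2 * (sqrtC (f2 P) * sqrtC (f2 Q) + sqrtC (f2 Q) ^+ 2)).
have [Y0 [e0 h0]] := g_attain hP.
have [Y1 [e1 h1]] := g_attain hPQ.
have g0 : 0 <= g P by rewrite e0 f2_ge0.
have g1 : 0 <= g (P + Q) by rewrite e1 f2_ge0.
rewrite -(sqrtCK (g P)) -(sqrtCK (g (P + Q))).
apply: arith; rewrite ?sqrtC_ge0 ?f2_ge0 //.
- by rewrite ler_sqrtC ?nnegrE ?f2_ge0 //; exact: g_le0.
- rewrite -ler_sqr ?nnegrE ?addr_ge0 ?sqrtC_ge0 ?f2_ge0 // sqrtCK e1.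
  apply: le_trans (h1 _ hP) _.
  have -> : P - Y1 = (P + Q - Y1) - Q.
    by rewrite addrAC addrK.
  exact: f2_tri.
- rewrite -ler_sqr ?nnegrE ?addr_ge0 ?sqrtC_ge0 ?f2_ge0 // sqrtCK e0.
  apply: le_trans (h0 _ hPQ) _.
  have -> : P + Q - Y0 = (P - Y0) - (- Q).
    by rewrite opprK addrAC.
  by rewrite -(@f2_opp _ _ Q); exact: f2_tri.
Qed.
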